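(* Let $G=(V,E)$ be a neutral graph and let $G^{\ominus}$ be the graph with vertex set $V\cup V^{\circ}$, where $V^{\circ}=\{u^{\circ}:u\in V\}$ is a disjoint copy of $V$, and edge set consisting of, for each edge $uv\in E$, the four edges $uv$, $u^{\circ}v^{\circ}$, $uv^{\circ}$ and $u^{\circ}v$. Then $G^{\ominus}$ has the same assortativity coefficient as $G$, i.e. $r(G^{\ominus})=r(G)$.
   Context: All graphs are finite, simple and connected. (Equivalently, $G^{\ominus}$ is obtained from $G$ and a copy $G^{\circ}$ by additionally joining each vertex $u$ of $G$ to all neighbours of its copy $u^{\circ}$ in $G^{\circ}$.) For a graph $G=(V,E)$ with $m=|E|\geq1$ and degrees $d_u$, the assortativity coefficient is $$r(G)=\frac{m^{-1}\sum_{e_{uv}\in E} d_{u}d_{v}-\Big[m^{-1}\sum_{e_{uv}\in E} \tfrac{1}{2}(d_{u}+d_{v})\Big]^{2}}{m^{-1}\sum_{e_{uv}\in E} \tfrac{1}{2}(d^{2}_{u}+d^{2}_{v})-\Big[m^{-1}\sum_{e_{uv}\in E} \tfrac{1}{2}(d_{u}+d_{v})\Big]^{2}},$$ sums over edges counting each edge once, defined whenever the denominator is nonzero; $G$ is neutral if $r(G)$ is defined and equals $0$. *)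

(* Defs.v *)
From mathcomp Require Import all_boot all_order all_algebra.
Set Implicit Arguments. Unset Strict Implicit. Unset Printing Implicit Defensive.
Import Order.TTheory GRing.Theory Num.Theory.
Local Open Scope ring_scope.

Definition simple_graph (T : finType) (e : rel T) : Prop :=
  symmetric e /\ irreflexive e.

Definition connected_graph (T : finType) (e : rel T) : Prop :=
  forall u v : T, connect e u v.

Definition deg (T : finType) (e : rel T) (u : T) : nat := #|[set v | e u v]|.

(* Sum of a quantity f u v, symmetric in u v, over the edge set, counting
   each (unordered) edge once: it is half the sum over ordered adjacent pairs. *)
Definition edge_sum (R : realFieldType) (T : finType) (e : rel T)
  (f : T -> T -> R) : R :=
  (\sum_(u : T) \sum_(v : T | e u v) f u v) / 2.

Definition nedges (R : realFieldType) (T : finType) (e : rel T) : R :=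
  edge_sum e (fun _ _ => 1).

Definition dR (R : realFieldType) (T : finType) (e : rel T) (u : T) : R :=
  (deg e u)%:R.

Definition assort_mean (R : realFieldType) (T : finType) (e : rel T) : R :=
  (nedges R e)^-1 * edge_sum e (fun u v => (dR R e u + dR R e v) / 2).

Definition assort_num (R : realFieldType) (T : finType) (e : rel T) : R :=
  (nedges R e)^-1 * edge_sum e (fun u v => dR R e u * dR R e v)
  - (assort_mean R e) ^+ 2.

Definition assort_den (R : realFieldType) (T : finType) (e : rel T) : R :=
  (nedges R e)^-1 * edge_sum e (fun u v => (dR R e u ^+ 2 + dR R e v ^+ 2) / 2)
  - (assort_mean R e) ^+ 2.

Definition assort_defined (R : realFieldType) (T : finType) (e : rel T) : Prop :=
  (0 < nedges R e) /\ assort_den R e != 0.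

Definition assort (R : realFieldType) (T : finType) (e : rel T) : R :=
  assort_num R e / assort_den R e.

Definition neutral (R : realFieldType) (T : finType) (e : rel T) : Prop :=
  assort_defined R e /\ assort R e = 0.

(* The graph G^⊖ on V ⊔ V° (vertex type T + T, inl u = u, inr u = u°):
   x ~ y iff their underlying vertices of G are adjacent, i.e. for each
   edge uv of G the four edges uv, u°v°, uv°, u°v. *)
Definition proj_copy (T : finType) (x : T + T) : T :=
  match x with inl u => u | inr u => u end.

Definition ominus (T : finType) (e : rel T) : rel (T + T)%type :=
  fun x y => e (proj_copy x) (proj_copy y).

(* Main.v *)
Require Import Defs.
From mathcomp Require Import all_boot all_order all_algebra.
From mathcomp Require Import ring lra.
Import Order.TTheory GRing.Theory Num.Theory.
Local Open Scope ring_scope.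

Lemma deg_sum (T : finType) (e : rel T) u : deg e u = (\sum_(v | e u v) 1)%N.
Proof. by rewrite /deg -sum1_card; apply: eq_bigl => v; rewrite inE. Qed.

Lemma deg_om (T : finType) (e : rel T) x :
  deg (ominus e) x = (2 * deg e (proj_copy x))%N.
Proof.
rewrite !deg_sum big_sumType /=.
by rewrite /ominus /= mul2n -addnn.
Qed.

Lemma dR_om (R : realFieldType) (T : finType) (e : rel T) x :
  dR R (ominus e) x = 2 * dR R e (proj_copy x).
Proof. by rewrite /dR deg_om natrM. Qed.

Lemma esum_om (R : realFieldType) (T : finType) (e : rel T) (F : T -> T -> R) :
  edge_sum (ominus e) (fun x y => F (proj_copy x) (proj_copy y)) = 4 * edge_sum e F.
Proof.
rewrite /edge_sum big_sumType /=.
have H : forall u : (T + T)%type, \sum_(y | ominus e u y) F (proj_copy u) (proj_copy y)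
   = 2 * \sum_(v | e (proj_copy u) v) F (proj_copy u) v.
  by move=> u; rewrite big_sumType /= /ominus /= mulr2n mulrDl mul1r.
rewrite (eq_bigr _ (fun u _ => H (inl u))).
rewrite /= -!mulr_sumr; by field.
Qed.

Lemma eq_esum (R : realFieldType) (T : finType) (e : rel T) (f g : T -> T -> R) :
  (forall u v, f u v = g u v) -> edge_sum e f = edge_sum e g.
Proof.
move=> H; rewrite /edge_sum; congr (_ / _); apply: eq_bigr => u _.
by apply: eq_bigr => v _.
Qed.

Lemma esumZ (R : realFieldType) (T : finType) (e : rel T) (c : R) (f : T -> T -> R) :
  edge_sum e (fun u v => c * f u v) = c * edge_sum e f.
Proof.
rewrite /edge_sum mulrA; congr (_ / _); rewrite mulr_sumr; apply: eq_bigr => u _.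
by rewrite mulr_sumr.
Qed.

Lemma esum_omd (R : realFieldType) (T : finType) (e : rel T) (F : R -> R -> R) :
  edge_sum (ominus e) (fun x y => F (dR R (ominus e) x) (dR R (ominus e) y))
  = 4 * edge_sum e (fun u v => F (2 * dR R e u) (2 * dR R e v)).
Proof.
rewrite -(esum_om _ _ e (fun u v => F (2 * dR R e u) (2 * dR R e v))).
by apply: eq_esum => x y; rewrite !dR_om.
Qed.

Theorem mainTheorem13 (R : realFieldType) (T : finType) (e : rel T) :
  simple_graph e -> connected_graph e -> neutral R e ->
  assort_defined R (ominus e) /\ assort R (ominus e) = assort R e.
Proof.
move=> _ _ [[Hm Hd] _].
have Em : nedges R (ominus e) = 4 * nedges R e.
  by rewrite /nedges -(esum_om _ _ e (fun _ _ => 1)).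
have Hm0 : nedges R e != 0 by rewrite gt_eqF.
have Emean : assort_mean R (ominus e) = 2 * assort_mean R e.
  rewrite /assort_mean Em (esum_omd _ _ e (fun a b => (a + b) / 2)).
  rewrite (@eq_esum _ _ _ _ (fun u v => 2 * ((dR R e u + dR R e v) / 2))); last first.
    by move=> u v /=; ring.
  rewrite esumZ; field; rewrite Hm0 /=; lra.
have En : assort_num R (ominus e) = 4 * assort_num R e.
  rewrite /assort_num Em Emean (esum_omd _ _ e (fun a b => a * b)).
  rewrite (@eq_esum _ _ _ _ (fun u v => 4 * (dR R e u * dR R e v))); last first.
    by move=> u v /=; ring.
  rewrite esumZ; field; rewrite Hm0 /=; lra.
have Ed : assort_den R (ominus e) = 4 * assort_den R e.
  rewrite /assort_den Em Emean (esum_omd _ _ e (fun a b => (a ^+ 2 + b ^+ 2) / 2)).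
  rewrite (@eq_esum _ _ _ _ (fun u v => 4 * ((dR R e u ^+ 2 + dR R e v ^+ 2) / 2))); last first.
    by move=> u v /=; ring.
  rewrite esumZ; field; rewrite Hm0 /=; lra.
split; first split.
- rewrite Em; lra.
- rewrite Ed mulf_neq0 //; lra.
- by rewrite /assort En Ed; field; rewrite Hd /=; lra.
Qed.
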